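(* Let $r\ge1$ and let $k_1,\dots,k_{r+1}$ be positive integers. Then in $\mathfrak{H}^1[[t]]$, $$\widehat{\phi}\bigl((z_{k_1}ш\cdotsш z_{k_r})x^{k_{r+1}}\bigr)=(z_{k_1}ш\cdotsш z_{k_r})x^{k_{r+1}}+\sum_{i=1}^r(-1)^{k_i+k_{r+1}}\sum_{l,l'\ge0}\binom{k_i+l-1}{l}\binom{k_{r+1}+l'-1}{l'}\bigl(z_{k_1}ш\cdotsш\check{z}_{k_i}ш\cdotsш z_{k_r}ш z_{k_{r+1}+l'}\bigr)x^{k_i+l}\,t^{l+l'},$$ where $\check{z}_{k_i}$ means the factor $z_{k_i}$ is omitted.
   Context: $\mathfrak{H}=\mathbb{Q}\langle x,y\rangle$, $\mathfrak{H}^1=\mathbb{Q}+y\mathfrak{H}$, $z_k=yx^{k-1}$, $z_{\boldsymbol{k}}=z_{k_1}\cdots z_{k_r}$, $z_\varnothing=1$. The shuffle product $ш$ on $\mathfrak{H}$ is the $\mathbb{Q}$-bilinear map with $aш1=1шa=a$ and $(a_1u_1)ш(a_2u_2)=(a_1ш a_2u_2)u_1+(a_1u_1ш a_2)u_2$ for $a_1,a_2\in\mathfrak{H}$, $u_1,u_2\in\{x,y\}$, extended $\mathbb{Q}[[t]]$-bilinearly. For tuples $\boldsymbol{k}=(k_1,\dots,k_r)$, $\boldsymbol{l}=(l_1,\dots,l_r)$ of nonnegative integers: $\mathrm{wt}(\boldsymbol{k})=\sum k_i$, $\overline{\boldsymbol{k}}=(k_r,\dots,k_1)$, $\boldsymbol{k}+\boldsymbol{l}=(k_1+l_1,\dots,k_r+l_r)$,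 $b\binom{\boldsymbol{k}}{\boldsymbol{l}}=\prod_i\binom{k_i+l_i-1}{l_i}$ with $\binom{l-1}{l}=\delta_{l,0}$, $\boldsymbol{k}_{[i]}=(k_1,\dots,k_i)$, $\boldsymbol{k}^{[i]}=(k_{i+1},\dots,k_r)$. The $t$-adic symmetrization map is the $\mathbb{Q}[[t]]$-linear map $\widehat{\phi}:\mathfrak{H}^1[[t]]\to\mathfrak{H}^1[[t]]$ defined on an index $\boldsymbol{k}$ of depth $r$ by $$\widehat{\phi}(z_{\boldsymbol{k}})=\sum_{i=0}^r(-1)^{\mathrm{wt}(\boldsymbol{k}^{[i]})}z_{\boldsymbol{k}_{[i]}}\,ш\sum_{\boldsymbol{l}\in\mathbb{Z}_{\ge0}^{r-i}}b\binom{\boldsymbol{k}^{[i]}}{\boldsymbol{l}}z_{\overline{\boldsymbol{k}^{[i]}+\boldsymbol{l}}}\,t^{\mathrm{wt}(\boldsymbol{l})}.$$ *)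

(* Defs.v *)
From mathcomp Require Import all_boot all_order all_algebra.
Set Implicit Arguments. Unset Strict Implicit. Unset Printing Implicit Defensive.
Import Order.TTheory GRing.Theory Num.Theory.
Local Open Scope ring_scope.

Definition word := seq bool.
Definition xL : bool := false.
Definition yL : bool := true.

Definition zl (k : nat) : word := yL :: nseq k.-1 xL.
Definition zw (ks : seq nat) : word := flatten (map zl ks).

(* Elements of H = Q<x,y> are represented as formal finite Q-linear
   combinations of words; two formal sums denote the same element iff
   their coefficient functions [coef] agree. *)
Definition fsum := seq (rat * word).
Definition coef (p : fsum) (w : word) : rat :=
  \sum_(cw <- p | cw.2 == w) cw.1.
Definition fs_word (w : word) : fsum := [:: (1, w)].
Definition fs_scale (c : rat) (p : fsum) : fsum :=
  [seq (c * cw.1, cw.2) | cw <- p].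
Definition fs_rcat (p : fsum) (u : word) : fsum :=
  [seq (cw.1, cw.2 ++ u) | cw <- p].

(* Shuffle of words, following the recursive definition
   (a1 u1) ш (a2 u2) = (a1 ш a2 u2) u1 + (a1 u1 ш a2) u2,
   computed on reversed words (the last letter becomes the head).
   The result is the multiset of words of the shuffle (coefficient 1 each). *)
Fixpoint shr (a b : word) : seq word :=
  match a with
  | [::] => [:: b]
  | u1 :: a1 =>
      let fix shr_b (b : word) : seq word :=
        match b with
        | [::] => [:: a]
        | u2 :: b1 => map (cons u1) (shr a1 (u2 :: b1)) ++ map (cons u2) (shr_b b1)
        end in shr_b b
  end.
Definition wshuffle (a b : word) : seq word := map rev (shr (rev a) (rev b)).

Definition fs_shuffle (p q : fsum) : fsum :=
  flatten [seq flatten [seq [seq (cw1.1 * cw2.1, w) | w <- wshuffle cw1.2 cw2.2]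
                       | cw2 <- q] | cw1 <- p].

Definition shuffle_list (ks : seq nat) : fsum :=
  foldr (fun k p => fs_shuffle (fs_word (zl k)) p) (fs_word [::]) ks.

Fixpoint comps (m n : nat) : seq (seq nat) :=
  match m with
  | 0 => if n == 0%N then [:: [::]] else [::]
  | m'.+1 => flatten [seq [seq j :: l | l <- comps m' (n - j)] | j <- iota 0 n.+1]
  end.

(* b(k; l) = prod_i binom(k_i + l_i - 1, l_i); with truncated subtraction
   'C(0 + l - 1, l) = delta_{l,0}, matching the convention. *)
Definition bcoef (ks ls : seq nat) : nat :=
  \prod_(p <- zip ks ls) 'C(p.1 + p.2 - 1, p.2).

(* Coefficient of t^n in hat-phi(z_k), for an index k. *)
Definition phihat_word (ks : seq nat) (n : nat) : fsum :=
  flatten [seq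
    let kl := take i ks in
    let kr := drop i ks in
    fs_scale ((-1) ^+ sumn kr)
      (fs_shuffle (fs_word (zw kl))
         (flatten [seq fs_scale (bcoef kr l)%:R
                         (fs_word (zw (rev [seq p.1 + p.2 | p <- zip kr l])))
                  | l <- comps (size kr) n]))
  | i <- iota 0 (size ks).+1].

(* Index of a word y x^(a_1) y x^(a_2) ... y x^(a_r) in H^1: (a_1+1,...,a_r+1);
   the empty word has the empty index. (Only meaningful on words of H^1.) *)
Fixpoint idx_aux (acc : nat) (w : word) : seq nat :=
  match w with
  | [::] => [:: acc]
  | b :: w' => if b then acc :: idx_aux 1 w' else idx_aux acc.+1 w'
  end.
Definition idx_of (w : word) : seq nat :=
  match w with [::] => [::] | _ :: w' => idx_aux 1 w' end.

(* Q-linear (hence, on t-free inputs, Q[[t]]-linear) extension of hat-phi;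
   an element of H^1[[t]] is given by its t-coefficients n |-> fsum. *)
Definition phihat (p : fsum) (n : nat) : fsum :=
  flatten [seq fs_scale cw.1 (phihat_word (idx_of cw.2) n) | cw <- p].

(* Main.v *)
Require Import Defs.
From mathcomp Require Import all_boot all_order all_algebra.
From mathcomp Require Import zify ring lra.
Import Order.TTheory GRing.Theory Num.Theory.
Local Open Scope ring_scope.

Module Aux.
Set Implicit Arguments. Unset Strict Implicit. Unset Printing Implicit Defensive.

Definition I (p : fsum) (G : word -> rat) : rat := \sum_(cw <- p) cw.1 * G cw.2.

Lemma I_nil G : I [::] G = 0. Proof. by rewrite /I big_nil. Qed.
Lemma I_cat p q G : I (p ++ q) G = I p G + I q G. Proof. by rewrite /I big_cat. Qed.
Lemma I_word w G : I (fs_word w) G = G w.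
Proof. by rewrite /I /fs_word big_cons big_nil mul1r addr0. Qed.
Lemma I_scale c p G : I (fs_scale c p) G = c * I p G.
Proof. rewrite /I /fs_scale big_map mulr_sumr; apply: eq_bigr => cw _; by rewrite mulrA. Qed.
Lemma I_rcat p u G : I (fs_rcat p u) G = I p (fun w => G (w ++ u)).
Proof. by rewrite /I /fs_rcat big_map. Qed.
Lemma I_flatten (T : Type) (s : seq T) (f : T -> fsum) G :
  I (flatten (map f s)) G = \sum_(x <- s) I (f x) G.
Proof. elim: s => [|x s IH] /=; first by rewrite I_nil big_nil. by rewrite I_cat IH big_cons. Qed.
Lemma I_ext p G G' : G =1 G' -> I p G = I p G'.
Proof. by move=> e; apply: eq_bigr => cw _; rewrite e. Qed.
Lemma I_ext_in p G G' : (forall cw, cw \in p -> G cw.2 = G' cw.2) -> I p G = I p G'.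
Proof. move=> e; rewrite /I big_seq_cond [RHS]big_seq_cond; apply: eq_bigr => cw /andP[h _]; by rewrite e. Qed.
Lemma I_add p G G' : I p (fun w => G w + G' w) = I p G + I p G'.
Proof. by rewrite /I -big_split; apply: eq_bigr => cw _; rewrite mulrDr. Qed.
Lemma I_mull p c G : I p (fun w => c * G w) = c * I p G.
Proof. rewrite /I mulr_sumr; apply: eq_bigr => cw _; by rewrite mulrCA. Qed.
Lemma I_sum (T : Type) p (s : seq T) (f : T -> word -> rat) :
  I p (fun w => \sum_(x <- s) f x w) = \sum_(x <- s) I p (f x).
Proof. rewrite /I exchange_big /=; apply: eq_bigr => cw _; by rewrite mulr_sumr. Qed.
Lemma I_zero p : I p (fun _ => 0) = 0.
Proof. by rewrite /I big1 // => cw _; rewrite mulr0. Qed.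

Lemma coefE p w : coef p w = I p (fun v => (v == w)%:R).
Proof.
rewrite /coef /I big_mkcond /=; apply: eq_bigr => cw _.
by case: eqP => _; rewrite ?mulr1 ?mulr0.
Qed.

Definition SH (a b : word) (G : word -> rat) : rat := \sum_(w <- shr a b) G w.
Arguments SH : simpl never.

Lemma shr_nil_l b : shr [::] b = [:: b]. Proof. by []. Qed.
Lemma shr_nil_r a : shr a [::] = [:: a]. Proof. by case: a. Qed.
Lemma shr_cons p a q b :
  shr (p :: a) (q :: b) = map (cons p) (shr a (q :: b)) ++ map (cons q) (shr (p :: a) b).
Proof. by []. Qed.

Lemma SH_nil_l b G : SH [::] b G = G b. Proof. by rewrite /SH big_cons big_nil addr0. Qed.
Lemma SH_nil_r a G : SH a [::] G = G a. Proof. by rewrite /SH shr_nil_r big_cons big_nil addr0. Qed.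
Lemma SH_cons p a q b G :
  SH (p :: a) (q :: b) G = SH a (q :: b) (fun w => G (p :: w)) + SH (p :: a) b (fun w => G (q :: w)).
Proof. by rewrite /SH shr_cons big_cat !big_map. Qed.
Lemma SH_ext a b G G' : G =1 G' -> SH a b G = SH a b G'.
Proof. by move=> e; apply: eq_bigr => w _; rewrite e. Qed.
Lemma SH_add a b G G' : SH a b (fun w => G w + G' w) = SH a b G + SH a b G'.
Proof. by rewrite /SH big_split. Qed.
Lemma SH_mull a b c G : SH a b (fun w => c * G w) = c * SH a b G.
Proof. by rewrite /SH mulr_sumr. Qed.
Lemma SH_sum (T : Type) a b (s : seq T) (f : T -> word -> rat) :
  SH a b (fun w => \sum_(x <- s) f x w) = \sum_(x <- s) SH a b (f x).
Proof. by rewrite /SH exchange_big. Qed.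
Lemma SH_zero a b : SH a b (fun _ => 0) = 0.
Proof. by rewrite /SH big1. Qed.
Lemma SH_I a b p (K : word -> word -> rat) :
  SH a b (fun w => I p (K w)) = I p (fun v => SH a b (fun w => K w v)).
Proof. rewrite /I /SH exchange_big /=; apply: eq_bigr => cw _; by rewrite mulr_sumr. Qed.
Lemma SH_SH a b c d (K : word -> word -> rat) :
  SH a b (fun w => SH c d (K w)) = SH c d (fun v => SH a b (fun w => K w v)).
Proof. by rewrite /SH exchange_big. Qed.

Lemma rcons_cons' (p : bool) a u : rcons (p :: a) u = p :: rcons a u. Proof. by []. Qed.
Lemma rcons_nil' (u : bool) : rcons [::] u = [:: u]. Proof. by []. Qed.

Lemma SH_rcons a u b v G :
  SH (rcons a u) (rcons b v) G =
  SH a (rcons b v) (fun w => G (rcons w u)) + SH (rcons a u) b (fun w => G (rcons w v)).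
Proof.
move: {2}(size a + size b)%N (leqnn (size a + size b)%N) => N.
elim: N a b G => [|N IH] a b G.
  case: a => [|? ?] //; case: b => [|? ?] // _.
  by rewrite !rcons_nil' SH_cons !SH_nil_l !SH_nil_r addrC.
case: a => [|p a]; case: b => [|q b] hs.
- by rewrite !rcons_nil' SH_cons !SH_nil_l !SH_nil_r addrC.
- rewrite !rcons_nil' !rcons_cons' SH_cons !SH_nil_l.
  have h : (size (@nil bool) + size b <= N)%N by rewrite /= in hs *.
  rewrite (IH [::] b _ h) rcons_nil' SH_cons SH_nil_l !addrA; congr (_ + _).
  by rewrite SH_nil_l addrC.
- rewrite !rcons_nil' !rcons_cons' SH_cons !SH_nil_r.
  have h : (size a + size (@nil bool) <= N)%N by move: hs; rewrite /= !addn0.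
  rewrite (IH a [::] _ h) rcons_nil' SH_cons SH_nil_r -!addrA; congr (_ + _).
  by rewrite SH_nil_r addrC.
- rewrite !rcons_cons' SH_cons.
  have h1 : (size a + size (q :: b) <= N)%N by move: hs => /=; lia.
  have h2 : (size (p :: a) + size b <= N)%N by move: hs => /=; lia.
  rewrite -rcons_cons' (IH a (q :: b) _ h1) -rcons_cons' (IH (p :: a) b _ h2).
  rewrite !rcons_cons' [SH (p :: a) (q :: rcons b v) _]SH_cons [SH (p :: rcons a u) (q :: b) _]SH_cons.
  rewrite -!addrA; congr (_ + _); rewrite addrCA; congr (_ + _); by rewrite addrC.
Qed.

Lemma size_rev_nat (s : word) : size (rev s) = size s. Proof. exact: size_rev. Qed.

Lemma SH_rev a b G : SH (rev a) (rev b) (fun w => G (rev w)) = SH a b G.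
Proof.
move: {2}(size a + size b)%N (leqnn (size a + size b)%N) => N.
elim: N a b G => [|N IH] a b G.
  case: a => [|? ?] //; case: b => [|? ?] // _.
  by rewrite /= SH_nil_l SH_nil_l.
case/lastP: a => [|a u]; case/lastP: b => [|b v] hs.
- by rewrite /= !SH_nil_l.
- by rewrite !SH_nil_l revK.
- by rewrite !SH_nil_r revK.
- rewrite !rev_rcons SH_cons SH_rcons.
  have h1 : (size a + size (rcons b v) <= N)%N by move: hs; rewrite !size_rcons; lia.
  have h2 : (size (rcons a u) + size b <= N)%N by move: hs; rewrite !size_rcons; lia.
  rewrite -rev_rcons -(IH _ _ _ h1); congr (_ + _).
    by apply: SH_ext => w; rewrite rev_cons.
  rewrite -[u :: rev a]rev_rcons -(IH _ _ _ h2).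
  by apply: SH_ext => w; rewrite rev_cons.
Qed.

Lemma wshuffleE a b G : \sum_(w <- wshuffle a b) G w = SH a b G.
Proof. by rewrite /wshuffle big_map -SH_rev. Qed.

Lemma I_shuffle p q G : I (fs_shuffle p q) G = I p (fun a => I q (fun b => SH a b G)).
Proof.
rewrite /I /fs_shuffle big_flatten /= big_map; apply: eq_bigr => cw1 _.
rewrite big_flatten /= big_map mulr_sumr; apply: eq_bigr => cw2 _.
rewrite big_map -wshuffleE !mulr_sumr; apply: eq_bigr => w _; by rewrite mulrA.
Qed.

Lemma SH_comm a b G : SH a b G = SH b a G.
Proof.
move: {2}(size a + size b)%N (leqnn (size a + size b)%N) => N.
elim: N a b G => [|N IH] a b G.
  by case: a => [|? ?] //; case: b => [|? ?] // _; rewrite !SH_nil_l.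
case: a => [|p a]; case: b => [|q b] hs; rewrite ?SH_nil_l ?SH_nil_r //.
rewrite !SH_cons addrC; congr (_ + _); apply: IH; move: hs => /=; lia.
Qed.

Lemma SH_assoc a b c G : SH a b (fun w => SH w c G) = SH b c (fun w => SH a w G).
Proof.
move: {2}(size a + size b + size c)%N (leqnn (size a + size b + size c)%N) => N.
elim: N a b c G => [|N IH] a b c G.
  by case: a => [|? ?] //; case: b => [|? ?] //; case: c => [|? ?] // _; rewrite !SH_nil_l.
case: a => [|p a] hs.
  rewrite SH_nil_l; apply: SH_ext => w; by rewrite SH_nil_l.
case: b hs => [|q b] hs.
  by rewrite SH_nil_r SH_nil_l.
case: c hs => [|r c] hs.
  rewrite SH_nil_r; apply: SH_ext => w; by rewrite SH_nil_r.
rewrite SH_cons.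
have e1 : forall w, SH (p :: w) (r :: c) G = SH w (r :: c) (fun v => G (p :: v)) + SH (p :: w) c (fun v => G (r :: v)).
  by move=> w; rewrite SH_cons.
have e2 : forall w, SH (q :: w) (r :: c) G = SH w (r :: c) (fun v => G (q :: v)) + SH (q :: w) c (fun v => G (r :: v)).
  by move=> w; rewrite SH_cons.
rewrite (SH_ext _ _ e1) (SH_ext _ _ e2) !SH_add.
have hM1 : SH a (q :: b) (fun w => SH (p :: w) c (fun v => G (r :: v))) +
          SH (p :: a) b (fun w => SH (q :: w) c (fun v => G (r :: v))) =
          SH (p :: a) (q :: b) (fun w => SH w c (fun v => G (r :: v))) by rewrite SH_cons.
rewrite SH_cons.
have f1 : forall w, SH (p :: a) (q :: w) G = SH a (q :: w) (fun v => G (p :: v)) + SH (p :: a) w (fun v => G (q :: v)).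
  by move=> w; rewrite SH_cons.
have f2 : forall w, SH (p :: a) (r :: w) G = SH a (r :: w) (fun v => G (p :: v)) + SH (p :: a) w (fun v => G (r :: v)).
  by move=> w; rewrite SH_cons.
rewrite (SH_ext _ _ f1) (SH_ext _ _ f2) !SH_add.
have hM2 : SH b (r :: c) (fun w => SH a (q :: w) (fun v => G (p :: v))) +
          SH (q :: b) c (fun w => SH a (r :: w) (fun v => G (p :: v))) =
          SH (q :: b) (r :: c) (fun w => SH a w (fun v => G (p :: v))) by rewrite SH_cons.
rewrite (IH a (q :: b) (r :: c)) in hM2 *; last by move: hs => /=; lia.
rewrite (IH (p :: a) b (r :: c)); last by move: hs => /=; lia.
rewrite (IH (p :: a) (q :: b) c) in hM1; last by move: hs => /=; lia.
rewrite -hM2 -hM1; ring.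
Qed.

Lemma SH_sign a b G :
  SH a b (fun w => (-1) ^+ size w * G w) = (-1) ^+ (size a + size b) * SH a b G.
Proof.
move: {2}(size a + size b)%N (leqnn (size a + size b)%N) => N.
elim: N a b G => [|N IH] a b G.
  by case: a => [|? ?] //; case: b => [|? ?] // _; rewrite !SH_nil_l.
case: a => [|p a]; case: b => [|q b] hs; rewrite ?SH_nil_l ?SH_nil_r ?addn0 //.
rewrite !SH_cons mulrDr.
have e : forall (u : bool) a' b' H, (size a' + size b' <= N)%N ->
    SH a' b' (fun w => (-1) ^+ size (u :: w) * H (u :: w)) =
    (-1) ^+ (size a' + size b').+1 * SH a' b' (fun w => H (u :: w)).
  move=> u a' b' H hn.
  rewrite (SH_ext _ _ (G' := fun w => -1 * ((-1) ^+ size w * H (u :: w)))); last first.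
    by move=> w /=; rewrite exprS mulrA.
  by rewrite SH_mull IH // exprS mulrA.
rewrite e; last by move: hs => /=; lia.
rewrite e; last by move: hs => /=; lia.
have -> : (size a + size (q :: b)).+1 = (size (p :: a) + size (q :: b))%N by rewrite /= addSn.
have -> : (size (p :: a) + size b).+1 = (size (p :: a) + size (q :: b))%N by rewrite /= addnS.
done.
Qed.

Definition xw (m : nat) : word := nseq m xL.

Lemma SH_xx a b G : SH (xw a) (xw b) G = ('C(a + b, a))%:R * G (xw (a + b)).
Proof.
elim: a b G => [|a IHa] b G.
  by rewrite SH_nil_l bin0 mul1r.
elim: b G => [|b IHb] G.
  by rewrite SH_nil_r addn0 binn mul1r.
rewrite /xw /= SH_cons.
rewrite -/(xw a) -/(xw b) -/(xw b.+1) -/(xw a.+1).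
rewrite (IHa b.+1) (IHb (fun w => G (xL :: w))).
have -> : (a + b.+1 = a.+1 + b)%N by rewrite addnS addSn.
rewrite /xw -mulrDl -natrD.
have -> : (a.+1 + b.+1 = (a.+1 + b).+1)%N by rewrite addnS.
by rewrite binS addnC.
Qed.

Fixpoint CUT (w : word) (Ps : word -> word -> rat) : rat :=
  match w with
  | [::] => Ps [::] [::]
  | p :: w' => Ps [::] w + CUT w' (fun u v => Ps (p :: u) v)
  end.

Fixpoint CY (w : word) (Ps : word -> word -> rat) : rat :=
  match w with
  | [::] => 0
  | p :: w' => (if p then Ps [::] w' else 0) + CY w' (fun u v => Ps (p :: u) v)
  end.

Lemma CUT_ext w Ps Ps' : (forall u v, Ps u v = Ps' u v) -> CUT w Ps = CUT w Ps'.
Proof.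
elim: w Ps Ps' => [|p w IH] Ps Ps' e /=; first exact: e.
by rewrite e (IH _ (fun u v => Ps' (p :: u) v)).
Qed.
Lemma CUT_ext_size w Ps Ps' : (forall u v, (size v <= size w)%N -> Ps u v = Ps' u v) ->
  CUT w Ps = CUT w Ps'.
Proof.
elim: w Ps Ps' => [|p w IH] Ps Ps' e /=; first exact: e.
rewrite e // (IH _ (fun u v => Ps' (p :: u) v)) // => u v h; apply: e; exact: leqW.
Qed.
Lemma CUT_add w Ps Ps' : CUT w (fun u v => Ps u v + Ps' u v) = CUT w Ps + CUT w Ps'.
Proof.
elim: w Ps Ps' => [|p w IH] Ps Ps' //=.
by rewrite (IH (fun u v => Ps (p :: u) v) (fun u v => Ps' (p :: u) v)); ring.
Qed.
Lemma CUT_mull w c Ps : CUT w (fun u v => c * Ps u v) = c * CUT w Ps.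
Proof.
elim: w Ps => [|p w IH] Ps //=.
by rewrite (IH (fun u v => Ps (p :: u) v)) mulrDr.
Qed.
Lemma CUT_opp w Ps : CUT w (fun u v => - Ps u v) = - CUT w Ps.
Proof. rewrite -mulN1r -CUT_mull; apply: CUT_ext => u v; by rewrite mulN1r. Qed.
Lemma CUT_zero w : CUT w (fun _ _ => 0) = 0.
Proof. by elim: w => [|p w IH] //=; rewrite IH addr0. Qed.
Lemma CUT_sum (T : Type) w (s : seq T) (f : T -> word -> word -> rat) :
  CUT w (fun u v => \sum_(x <- s) f x u v) = \sum_(x <- s) CUT w (f x).
Proof.
elim: s => [|x s IH]; first by rewrite big_nil (@CUT_ext w _ (fun _ _ => 0)) ?CUT_zero // => u v; rewrite big_nil.
rewrite big_cons -IH -CUT_add; apply: CUT_ext => u v; by rewrite big_cons.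
Qed.
Lemma CUT_SH w a b (K : word -> word -> word -> rat) :
  CUT w (fun u v => SH a b (K u v)) = SH a b (fun x => CUT w (fun u v => K u v x)).
Proof. by rewrite /SH -CUT_sum. Qed.
Lemma CUT_I w p (K : word -> word -> word -> rat) :
  CUT w (fun u v => I p (K u v)) = I p (fun x => CUT w (fun u v => K u v x)).
Proof.
rewrite /I CUT_sum; apply: eq_bigr => cw _; by rewrite CUT_mull.
Qed.
Lemma CUT_CUT w w' (K : word -> word -> word -> word -> rat) :
  CUT w (fun u v => CUT w' (K u v)) = CUT w' (fun u' v' => CUT w (fun u v => K u v u' v')).
Proof.
elim: w K => [|p w IH] K //=.
rewrite (IH (fun u v => K (p :: u) v)) -CUT_add; done.
Qed.

Lemma CY_ext w Ps Ps' : (forall u v, Ps u v = Ps' u v) -> CY w Ps = CY w Ps'.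
Proof.
elim: w Ps Ps' => [|p w IH] Ps Ps' e //=.
by rewrite e (IH _ (fun u v => Ps' (p :: u) v)).
Qed.
Lemma CY_add w Ps Ps' : CY w (fun u v => Ps u v + Ps' u v) = CY w Ps + CY w Ps'.
Proof.
elim: w Ps Ps' => [|p w IH] Ps Ps' /=; first by rewrite addr0.
rewrite (IH (fun u v => Ps (p :: u) v) (fun u v => Ps' (p :: u) v)).
by case: p; rewrite ?addr0; ring.
Qed.
Lemma CY_mull w c Ps : CY w (fun u v => c * Ps u v) = c * CY w Ps.
Proof.
elim: w Ps => [|p w IH] Ps /=; first by rewrite mulr0.
by rewrite (IH (fun u v => Ps (p :: u) v)) mulrDr; case: p; rewrite ?mulr0.
Qed.
Lemma CY_zero w : CY w (fun _ _ => 0) = 0.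
Proof. by elim: w => [|p w IH] //=; rewrite IH addr0; case: p. Qed.
Lemma CY_sum (T : Type) w (s : seq T) (f : T -> word -> word -> rat) :
  CY w (fun u v => \sum_(x <- s) f x u v) = \sum_(x <- s) CY w (f x).
Proof.
elim: s => [|x s IH]; first by rewrite big_nil (@CY_ext w _ (fun _ _ => 0)) ?CY_zero // => u v; rewrite big_nil.
rewrite big_cons -IH -CY_add; apply: CY_ext => u v; by rewrite big_cons.
Qed.
Lemma CY_SH w a b (K : word -> word -> word -> rat) :
  CY w (fun u v => SH a b (K u v)) = SH a b (fun x => CY w (fun u v => K u v x)).
Proof. by rewrite /SH -CY_sum. Qed.
Lemma CY_I w p (K : word -> word -> word -> rat) :
  CY w (fun u v => I p (K u v)) = I p (fun x => CY w (fun u v => K u v x)).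
Proof.
rewrite /I CY_sum; apply: eq_bigr => cw _; by rewrite CY_mull.
Qed.
Lemma CUT_CY w w' (K : word -> word -> word -> word -> rat) :
  CUT w (fun u v => CY w' (K u v)) = CY w' (fun u' v' => CUT w (fun u v => K u v u' v')).
Proof.
elim: w K => [|p w IH] K //=.
rewrite (IH (fun u v => K (p :: u) v)) -CY_add; done.
Qed.
Lemma CY_CUT w w' (K : word -> word -> word -> word -> rat) :
  CY w (fun u v => CUT w' (K u v)) = CUT w' (fun u' v' => CY w (fun u v => K u v u' v')).
Proof. by rewrite CUT_CY. Qed.

Lemma SH_ins u b Z G :
  SH u (b :: Z) G = CUT u (fun u1 u2 => SH u2 Z (fun m => G (u1 ++ b :: m))).
Proof.
elim: u G => [|p u IH] G /=; first by rewrite !SH_nil_l.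
rewrite SH_cons IH addrC; congr (_ + _).
Qed.

Lemma CUT_assoc B (K : word -> word -> word -> rat) :
  CUT B (fun u v => CUT u (fun u1 u2 => K u1 u2 v)) =
  CUT B (fun u1 q => CUT q (fun u2 v => K u1 u2 v)).
Proof.
elim: B K => [|p B IH] K //=.
rewrite CUT_add (IH (fun u1 u2 v => K (p :: u1) u2 v)) addrA; done.
Qed.

Lemma CUT_rcons w q Ps : CUT (rcons w q) Ps = Ps (rcons w q) [::] + CUT w (fun u v => Ps u (rcons v q)).
Proof.
elim: w Ps => [|p w IH] Ps /=; first by rewrite addrC.
rewrite (IH (fun u v => Ps (p :: u) v)); ring.
Qed.

Lemma CUT_last w (Phi : word -> rat) : CUT w (fun u v => (v == [::])%:R * Phi u) = Phi w.
Proof.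
elim: w Phi => [|p w IH] Phi /=; first by rewrite mul1r.
by rewrite mul0r add0r (IH (fun u => Phi (p :: u))).
Qed.

(* antipode property *)
Lemma antipode r H :
  CUT r (fun u v => (-1) ^+ size v * SH u (rev v) H) = (r == [::])%:R * H [::].
Proof.
move: {2}(size r) (leqnn (size r)) => N.
elim: N r H => [|N IH] r H.
  by case: r => [|? ?] // _; rewrite /= expr0 !mul1r SH_nil_l.
case/lastP: r => [|r q] hs.
  by rewrite /= expr0 !mul1r SH_nil_l.
rewrite CUT_rcons /= SH_nil_r mul1r.
have -> : CUT r (fun u v => (-1) ^+ size (rcons v q) * SH u (rev (rcons v q)) H) =
   - CUT r (fun u1 s => CUT s (fun u2 v => (-1) ^+ size v * SH u2 (rev v) (fun m => H (u1 ++ q :: m)))).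
  rewrite -CUT_assoc -CUT_opp; apply: CUT_ext => u v.
  rewrite rev_rcons size_rcons SH_ins -CUT_mull -CUT_opp.
  apply: CUT_ext => u1 u2; rewrite exprS; ring.
rewrite (CUT_ext_size (Ps' := fun u1 s => (s == [::])%:R * H (u1 ++ [:: q]))); last first.
  move=> u1 s hsz; rewrite IH //; last by move: hs; rewrite size_rcons; lia.
rewrite CUT_last cats1; have -> : (rcons r q == [::]) = false by case: (r) hs.
by rewrite mul0r subrr.
Qed.

Lemma SH_rcons_x a b G :
  SH (rcons a xL) (rcons b xL) G = SH a (rcons b xL) (fun w => G (rcons w xL)) + SH (rcons a xL) b (fun w => G (rcons w xL)).
Proof. exact: SH_rcons. Qed.

Lemma xw_S m : xw m.+1 = rcons (xw m) xL.
Proof. by rewrite /xw -cats1 -[(m.+1)]addn1 nseqD. Qed.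

Lemma SH_E P k n G :
  SH (P ++ xw k) (xw n) G =
  \sum_(l < n.+1) ('C(k + l - 1, l))%:R * SH P (xw (n - l)) (fun m => G (m ++ xw (k + l))).
Proof.
elim: k n G => [|k IHk] n G.
  rewrite cats0 big_ord_recl /= add0n bin0 mul1r subn0.
  rewrite big1 ?addr0; last by move=> i _; rewrite add0n /= subn1 /= bin_small // mul0r.
  by apply: SH_ext => m; rewrite cats0.
elim: n G => [|n IHn] G.
  rewrite big_ord_recl big_ord0 addr0 /= addn0 subn1 /= bin0 mul1r SH_nil_r SH_nil_r.
  by rewrite addn0.
rewrite xw_S -rcons_cat [xw n.+1]xw_S SH_rcons -xw_S rcons_cat -xw_S.
rewrite (IHk n.+1) (IHn (fun w => G (rcons w xL))) -/(xw k.+1).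
have ek : forall m l, rcons (m ++ xw (k + l)) xL = m ++ xw (k.+1 + l).
  by move=> m l; rewrite rcons_cat -xw_S addSn.
have ek' : forall m l, rcons (m ++ xw (k.+1 + l)) xL = m ++ xw (k.+1 + l.+1).
  by move=> m l; rewrite rcons_cat -xw_S addnS.
under eq_bigr => i _ do rewrite (SH_ext _ _ (fun m => congr1 G (ek m i))).
under [X in _ + X = _]eq_bigr => i _ do rewrite (SH_ext _ _ (fun m => congr1 G (ek' m i))).
rewrite [in LHS]big_ord_recl [in RHS]big_ord_recl addn0 addSn /=.
rewrite !bin0 -addrA; congr (_ + _).
rewrite -big_split /=; apply: eq_bigr => i _.
rewrite /bump /= add1n subSS.
have -> : (k + i.+1 - 1 = k + i)%N by lia.
have -> : (k.+1 + i - 1 = k + i)%N by lia.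
have -> : (k.+1 + i.+1 - 1 = (k + i).+1)%N by lia.
by rewrite binS natrD mulrDl.
Qed.

Lemma rev_xw m : rev (xw m) = xw m.
Proof. by rewrite /xw rev_nseq. Qed.

Definition Kf k1 c q H :=
  CUT q (fun u v => (-1) ^+ size v * SH (xw k1) (rev v) (fun W => SH u (xw c ++ W) H)).

Lemma Kf_step k1 c q H :
  Kf k1 c.+1 q H = CUT q (fun p1 r => Kf k1 c r (fun m => H (p1 ++ xL :: m))).
Proof.
rewrite /Kf -CUT_assoc; apply: CUT_ext => u v.
have e : forall W, SH u (xw c.+1 ++ W) H =
    CUT u (fun p1 p2 => SH p2 (xw c ++ W) (fun m => H (p1 ++ xL :: m))).
  by move=> W; rewrite -SH_ins.
rewrite (SH_ext _ _ e) -CUT_SH -CUT_mull; done.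
Qed.

Lemma Kf0 k1 r H : Kf k1 0 r H = (r == [::])%:R * SH [::] (xw k1) H.
Proof.
rewrite /Kf -(antipode r (fun w => SH w (xw k1) H)); apply: CUT_ext => u v.
congr (_ * _).
rewrite SH_comm SH_assoc; done.
Qed.

Lemma Klem k1 c q H : Kf k1 c.+1 q H = SH q (xw c) (fun P => H (P ++ xw k1.+1)).
Proof.
elim: c q H => [|c IH] q H.
  rewrite Kf_step (@CUT_ext _ _ (fun p1 r => (r == [::])%:R * H (p1 ++ xL :: xw k1))).
    by rewrite CUT_last SH_nil_r.
  by move=> p1 r; rewrite Kf0 SH_nil_l.
rewrite Kf_step (@CUT_ext _ _ (fun p1 r => SH r (xw c) (fun P => H (p1 ++ xL :: (P ++ xw k1.+1))))).
  rewrite /xw [nseq c.+1 _]/= SH_ins; apply: CUT_ext => u1 u2; apply: SH_ext => m.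
  by rewrite -catA.
by move=> p1 r; rewrite IH.
Qed.

(* the functional coming out of phihat *)
Definition PsiF (n : nat) (F : word -> rat) (u v : word) : rat :=
  (-1) ^+ (size v).+1 * SH (rev v) (xw n) (fun a => SH u (yL :: a) F).

Lemma lemma3 B k1 c1 n F :
  CUT B (fun u v => SH (xw k1) v (fun W => PsiF n F u (W ++ xw c1.+1))) =
  (-1) ^+ (k1.+1 + c1.+1) * \sum_(l < n.+1)
     ('C(k1.+1 + l - 1, l) * 'C(c1.+1 + (n - l) - 1, n - l))%:R *
     SH B (yL :: xw (c1.+1 + (n - l) - 1)) (fun b => F (b ++ xw (k1.+1 + l))).
Proof.
have ea : forall u v, SH (xw k1) v (fun W => PsiF n F u (W ++ xw c1.+1)) =
   (-1) ^+ (k1 + c1.+2) * ((-1) ^+ size v *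
     SH (xw k1) (rev v) (fun W => SH (xw c1.+1 ++ W) (xw n) (fun a => SH u (yL :: a) F))).
  move=> u v.
  rewrite /PsiF.
  rewrite (@SH_ext _ _ _ (fun W => (-1) ^+ size W * ((-1) ^+ c1.+2 *
            SH (xw c1.+1 ++ rev W) (xw n) (fun a => SH u (yL :: a) F)))); last first.
    move=> W; rewrite size_cat rev_cat rev_xw /xw size_nseq -/(xw c1.+1).
    by rewrite -addnS exprD mulrA.
  rewrite SH_sign SH_mull.
  rewrite -(SH_rev (xw k1) (rev v)) rev_xw revK /xw size_nseq -/(xw k1).
  by rewrite !exprD; ring.
rewrite (CUT_ext _ ea) CUT_mull.
have -> : (k1.+1 + c1.+1 = k1 + c1.+2)%N by lia.
congr (_ * _).
have ec : forall u v,
   (-1) ^+ size v * SH (xw k1) (rev v) (fun W => SH (xw c1.+1 ++ W) (xw n) (fun a => SH u (yL :: a) F)) =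
   CUT u (fun u1 u2 => (-1) ^+ size v * SH (xw k1) (rev v)
        (fun W => SH u2 (xw c1.+1 ++ W) (fun w => SH w (xw n) (fun m => F (u1 ++ yL :: m))))).
  move=> u v; rewrite CUT_mull; congr (_ * _).
  rewrite CUT_SH; apply: SH_ext => W.
  rewrite (@SH_ext _ _ _ (fun a => CUT u (fun u1 u2 => SH u2 a (fun m => F (u1 ++ yL :: m))))); last by move=> a; rewrite SH_ins.
  rewrite -CUT_SH; apply: CUT_ext => u1 u2; by rewrite SH_assoc.
rewrite (CUT_ext _ ec) CUT_assoc.
have ef : forall u1 q, CUT q (fun u2 v => (-1) ^+ size v * SH (xw k1) (rev v)
        (fun W => SH u2 (xw c1.+1 ++ W) (fun w => SH w (xw n) (fun m => F (u1 ++ yL :: m))))) =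
     \sum_(l < n.+1) ('C(k1.+1 + l - 1, l) * 'C(c1.+1 + (n - l) - 1, n - l))%:R *
        SH q (xw (c1.+1 + (n - l) - 1)) (fun m => F (u1 ++ yL :: (m ++ xw (k1.+1 + l)))).
  move=> u1 q.
  have := Klem k1 c1 q (fun w => SH w (xw n) (fun m => F (u1 ++ yL :: m))).
  rewrite /Kf => ->.
  under eq_bigr => l _ do rewrite natrM -mulrA.
  rewrite (@SH_ext _ _ _ (fun P => \sum_(l < n.+1) 'C(k1.+1 + l - 1, l)%:R *
     SH P (xw (n - l)) (fun m => F (u1 ++ yL :: (m ++ xw (k1.+1 + l)))))); last first.
    by move=> P; rewrite SH_E.
  rewrite SH_sum; apply: eq_bigr => l _; rewrite SH_mull; congr (_ * _).
  rewrite SH_assoc SH_xx.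
  have -> : (c1.+1 + (n - l) - 1 = c1 + (n - l))%N by lia.
  by have := bin_sub (leq_addl c1 (n - l)); rewrite addnK => ->.
rewrite (CUT_ext _ ef) CUT_sum; apply: eq_bigr => l _.
rewrite CUT_mull; congr (_ * _).
rewrite SH_ins; apply: CUT_ext => u1 u2; apply: SH_ext => m.
by rewrite -catA.
Qed.

Lemma CUT_nil Ps : CUT [::] Ps = Ps [::] [::]. Proof. by []. Qed.
Lemma CY_nil Ps : CY [::] Ps = 0. Proof. by []. Qed.

Lemma CUT_CYnil w (K : word -> word -> word -> word -> rat) : CUT w (fun u v => CY [::] (K u v)) = 0.
Proof. by rewrite (@CUT_ext _ _ (fun _ _ => 0)) ?CUT_zero. Qed.

Lemma CUT_cons p w Ps : CUT (p :: w) Ps = Ps [::] (p :: w) + CUT w (fun u v => Ps (p :: u) v).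
Proof. by []. Qed.
Lemma CY_cons (p : bool) w Ps : CY (p :: w) Ps = (if p then Ps [::] w else 0) + CY w (fun u v => Ps (p :: u) v).
Proof. by []. Qed.

Definition D1R a b (Ps : word -> word -> rat) :=
  CUT a (fun a1 a2 => CUT b (fun b1 b2 => SH a1 b1 (fun w1 => SH a2 b2 (Ps w1)))).

Lemma D1 a b Ps : SH a b (fun W => CUT W Ps) = D1R a b Ps.
Proof.
move: {2}(size a + size b)%N (leqnn (size a + size b)%N) => N.
elim: N a b Ps => [|N IH] a b Ps.
  case: a => [|? ?] //; case: b => [|? ?] // _.
  by rewrite /D1R /= !SH_nil_l.
rewrite /D1R.
case: a => [|p a]; case: b => [|q b] hs.
- by rewrite /= !SH_nil_l.
- rewrite SH_nil_l CUT_nil; apply: CUT_ext => b1 b2; by rewrite !SH_nil_l.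
- rewrite SH_nil_r; apply: CUT_ext => a1 a2; by rewrite CUT_nil !SH_nil_r.
set T0 := SH (p :: a) (q :: b) (Ps [::]).
set T1 := CUT a (fun a1 a2 => SH a2 (q :: b) (Ps (p :: a1))).
set T2 := CUT a (fun a1 a2 => CUT b (fun b1 b2 => SH a1 (q :: b1) (fun w1 => SH a2 b2 (Ps (p :: w1))))).
set T3 := CUT b (fun b1 b2 => SH (p :: a) b2 (Ps (q :: b1))).
set T4 := CUT a (fun a1 a2 => CUT b (fun b1 b2 => SH (p :: a1) b1 (fun w1 => SH a2 b2 (Ps (q :: w1))))).
have L : SH (p :: a) (q :: b) (fun W => CUT W Ps) = T0 + (T1 + T2) + (T3 + T4).
  rewrite SH_cons.
  have e : forall (r : bool) W, CUT (r :: W) Ps = Ps [::] (r :: W) + CUT W (fun u v => Ps (r :: u) v) by [].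
  rewrite (SH_ext _ _ (e p)) (SH_ext _ _ (e q)) !SH_add.
  have -> : SH a (q :: b) (fun W => CUT W (fun u v => Ps (p :: u) v)) = T1 + T2.
    rewrite IH; last by move: hs => /=; lia.
    rewrite /D1R /T1 /T2 -CUT_add; apply: CUT_ext => a1 a2 /=.
    by rewrite SH_nil_r.
  have -> : SH (p :: a) b (fun W => CUT W (fun u v => Ps (q :: u) v)) = T3 + T4.
    rewrite IH; last by move: hs => /=; lia.
    rewrite /D1R /T3 /T4 /=.
    congr (_ + _); apply: CUT_ext => b1 b2; by rewrite SH_nil_l.
  rewrite /T0 SH_cons; ring.
rewrite L /=.
rewrite SH_nil_r.
have -> : CUT b (fun u v => SH [::] (q :: u) (fun w1 => SH (p :: a) v (Ps w1))) = T3.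
  apply: CUT_ext => b1 b2; by rewrite SH_nil_l.
have -> : CUT a (fun u v => SH (p :: u) [::] (fun w1 => SH v (q :: b) (Ps w1)) +
    CUT b (fun u0 v0 => SH (p :: u) (q :: u0) (fun w1 => SH v v0 (Ps w1)))) = T1 + (T2 + T4).
  rewrite /T1 /T2 /T4 -!CUT_add; apply: CUT_ext => a1 a2.
  rewrite SH_nil_r; congr (_ + _).
  rewrite -CUT_add; apply: CUT_ext => b1 b2; by rewrite SH_cons.
rewrite -/T0; ring.
Qed.

Definition D2R a b (Ps : word -> word -> rat) :=
  CUT a (fun a1 a2 => CY b (fun b1 b2 => SH a1 b1 (fun w1 => SH a2 b2 (Ps w1)))) +
  CUT b (fun b1 b2 => CY a (fun a1 a2 => SH a1 b1 (fun w1 => SH a2 b2 (Ps w1)))).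

Lemma D2 a b Ps : SH a b (fun W => CY W Ps) = D2R a b Ps.
Proof.
move: {2}(size a + size b)%N (leqnn (size a + size b)%N) => N.
elim: N a b Ps => [|N IH] a b Ps.
  case: a => [|? ?] //; case: b => [|? ?] // _.
  by rewrite /D2R /= !SH_nil_l addr0.
rewrite /D2R.
case: a => [|p a]; case: b => [|q b] hs.
- by rewrite /= !SH_nil_l addr0.
- rewrite SH_nil_l CUT_nil CUT_CYnil addr0; apply: CY_ext => b1 b2; by rewrite !SH_nil_l.
- rewrite SH_nil_r CUT_nil CUT_CYnil add0r; apply: CY_ext => a1 a2; by rewrite !SH_nil_r.
set S1 := (if p then SH a (q :: b) (Ps [::]) else 0).
set S2 := (if q then SH (p :: a) b (Ps [::]) else 0).
set U1 := CUT a (fun a1 a2 => if q then SH a2 b (Ps (p :: a1)) else 0).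
set U2 := CUT a (fun a1 a2 => CY b (fun b1 b2 => SH a1 (q :: b1) (fun w1 => SH a2 b2 (Ps (p :: w1))))).
set U3 := CY a (fun a1 a2 => SH a2 (q :: b) (Ps (p :: a1))).
set U4 := CUT b (fun b1 b2 => CY a (fun a1 a2 => SH a1 (q :: b1) (fun w1 => SH a2 b2 (Ps (p :: w1))))).
set V1 := CY b (fun b1 b2 => SH (p :: a) b2 (Ps (q :: b1))).
set V2 := CUT a (fun a1 a2 => CY b (fun b1 b2 => SH (p :: a1) b1 (fun w1 => SH a2 b2 (Ps (q :: w1))))).
set V3 := CUT b (fun b1 b2 => if p then SH a b2 (Ps (q :: b1)) else 0).
set V4 := CUT b (fun b1 b2 => CY a (fun a1 a2 => SH (p :: a1) b1 (fun w1 => SH a2 b2 (Ps (q :: w1))))).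
have SH_if : forall a' b' (c : bool) G, SH a' b' (fun W => if c then G W else 0) = if c then SH a' b' G else 0.
  by move=> a' b' [] G //; rewrite SH_zero.
have L : SH (p :: a) (q :: b) (fun W => CY W Ps) = S1 + S2 + (U1 + U2) + (U3 + U4) + (V1 + V2) + (V3 + V4).
  rewrite SH_cons.
  have e : forall (r : bool) W, CY (r :: W) Ps = (if r then Ps [::] W else 0) + CY W (fun u v => Ps (r :: u) v) by [].
  rewrite (SH_ext _ _ (e p)) (SH_ext _ _ (e q)) !SH_add !SH_if -/S1 -/S2.
  rewrite IH; last by move: hs => /=; lia.
  rewrite [SH (p :: a) b _]IH; last by move: hs => /=; lia.
  rewrite /D2R.
  have -> : CUT a (fun a1 a2 => CY (q :: b) (fun b1 b2 => SH a1 b1 (fun w1 => SH a2 b2 (Ps (p :: w1))))) = U1 + U2.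
    rewrite /U1 /U2 -CUT_add; apply: CUT_ext => a1 a2 /=; by rewrite SH_nil_r.
  have -> : CUT (q :: b) (fun b1 b2 => CY a (fun a1 a2 => SH a1 b1 (fun w1 => SH a2 b2 (Ps (p :: w1))))) = U3 + U4.
    rewrite /U3 /U4 /=; congr (_ + _); apply: CY_ext => a1 a2; by rewrite SH_nil_r.
  have -> : CUT (p :: a) (fun a1 a2 => CY b (fun b1 b2 => SH a1 b1 (fun w1 => SH a2 b2 (Ps (q :: w1))))) = V1 + V2.
    rewrite /V1 /V2 /=; congr (_ + _); apply: CY_ext => b1 b2; by rewrite SH_nil_l.
  have -> : CUT b (fun b1 b2 => CY (p :: a) (fun a1 a2 => SH a1 b1 (fun w1 => SH a2 b2 (Ps (q :: w1))))) = V3 + V4.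
    rewrite /V3 /V4 -CUT_add; apply: CUT_ext => b1 b2 /=; by rewrite SH_nil_l.
  ring.
rewrite L.
have -> : CUT (p :: a) (fun a1 a2 => CY (q :: b) (fun b1 b2 => SH a1 b1 (fun w1 => SH a2 b2 (Ps w1)))) =
   S2 + V1 + (U1 + (U2 + V2)).
  rewrite CUT_cons CY_cons SH_nil_l -/S2.
  have -> : CY b (fun u v => SH [::] (q :: u) (fun w1 => SH (p :: a) v (Ps w1))) = V1.
    by apply: CY_ext => b1 b2; rewrite SH_nil_l.
  rewrite /U1 /U2 /V2 -!CUT_add; congr (_ + _); apply: CUT_ext => a1 a2.
  rewrite CY_cons SH_nil_r -CY_add; congr (_ + _); apply: CY_ext => b1 b2; by rewrite SH_cons.
have -> : CUT (q :: b) (fun b1 b2 => CY (p :: a) (fun a1 a2 => SH a1 b1 (fun w1 => SH a2 b2 (Ps w1)))) =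
   S1 + U3 + (V3 + (U4 + V4)).
  rewrite CUT_cons CY_cons SH_nil_l -/S1.
  have -> : CY a (fun u v => SH (p :: u) [::] (fun w1 => SH v (q :: b) (Ps w1))) = U3.
    by apply: CY_ext => a1 a2; rewrite SH_nil_r.
  rewrite /V3 /U4 /V4 -!CUT_add; congr (_ + _); apply: CUT_ext => b1 b2.
  rewrite CY_cons SH_nil_l -CY_add; congr (_ + _); apply: CY_ext => a1 a2; by rewrite SH_cons.
ring.
Qed.

Definition QW a b (Ps : word -> word -> rat) :=
  CUT a (fun a1 a2 => CY b (fun b1 b2 => SH a1 b1 (fun w1 => SH a2 b2 (Ps w1)))).

Lemma CY_xw m Ps : CY (xw m) Ps = 0.
Proof. by elim: m Ps => [|m IH] Ps //=; rewrite IH addr0. Qed.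

Lemma I_shuffle_list_cons k ks G :
  I (shuffle_list (k :: ks)) G = I (shuffle_list ks) (fun b => SH (zl k) b G).
Proof. by rewrite /= I_shuffle I_word. Qed.

Lemma I_I p q (K : word -> word -> rat) :
  I p (fun a => I q (K a)) = I q (fun b => I p (fun a => K a b)).
Proof.
rewrite /I (eq_bigr (fun cw => \sum_(cw' <- q) cw.1 * (cw'.1 * K cw.2 cw'.2))); last first.
  by move=> cw _; rewrite mulr_sumr.
rewrite exchange_big /=; apply: eq_bigr => cw' _; rewrite mulr_sumr; apply: eq_bigr => cw _.
by rewrite mulrCA.
Qed.

Lemma key4 a1 a2 z1 z2 b Ps :
  CY b (fun b1 b2 => SH z1 b1 (fun L => SH z2 b2 (fun R => SH a1 L (fun w1 => SH a2 R (Ps w1))))) =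
  SH a1 z1 (fun c1 => SH a2 z2 (fun c2 => CY b (fun b1 b2 => SH c1 b1 (fun w1 => SH c2 b2 (Ps w1))))).
Proof.
have e1 : forall c1, SH a2 z2 (fun c2 => CY b (fun b1 b2 => SH c1 b1 (fun w1 => SH c2 b2 (Ps w1)))) =
   CY b (fun b1 b2 => SH a2 z2 (fun c2 => SH c1 b1 (fun w1 => SH c2 b2 (Ps w1)))).
  by move=> c1; rewrite (CY_SH b a2 z2 (fun b1 b2 c2 => SH c1 b1 (fun w1 => SH c2 b2 (Ps w1)))).
rewrite (SH_ext _ _ e1).
rewrite -(CY_SH b a1 z1 (fun b1 b2 c1 => SH a2 z2 (fun c2 => SH c1 b1 (fun w1 => SH c2 b2 (Ps w1))))).
apply: CY_ext => b1 b2.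
rewrite [RHS](@SH_ext _ _ _ (fun c1 => SH c1 b1 (fun w1 => SH a2 z2 (fun c2 => SH c2 b2 (Ps w1))))); last first.
  by move=> c1; rewrite SH_SH.
rewrite [RHS]SH_assoc; apply: SH_ext => L.
rewrite [RHS](@SH_ext _ _ _ (fun w1 => SH z2 b2 (fun R => SH a2 R (Ps w1)))); last first.
  by move=> w1; rewrite SH_assoc.
by rewrite SH_SH.
Qed.

Lemma claim ks alpha Ps :
  I alpha (fun a => I (shuffle_list ks) (fun W => QW a W Ps)) =
  \sum_(i < size ks) I alpha (fun a => I (shuffle_list (take i ks ++ drop i.+1 ks))
       (fun b => SH a b (fun B => CUT B (fun u v => SH (xw (nth 0%N ks i).-1) v (Ps u))))).
Proof.
elim: ks alpha => [|k ks IH] alpha.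
  rewrite big_ord0 /= (@I_ext _ _ (fun _ => 0)) ?I_zero //.
  move=> a; rewrite I_word /QW; exact: CUT_CYnil.
rewrite big_ord_recl.
set z := zl k.
have key : forall a b, SH z b (fun W => QW a W Ps) =
   SH a b (fun B => CUT B (fun u v => SH (xw k.-1) v (Ps u))) + SH a z (fun a' => QW a' b Ps).
  move=> a b.
  rewrite /QW -CUT_SH.
  rewrite (@CUT_ext _ _ (fun a1 a2 => D2R z b (fun L R => SH a1 L (fun w1 => SH a2 R (Ps w1))))); last first.
    by move=> a1 a2; rewrite D2.
  rewrite /D2R CUT_add addrC; congr (_ + _).
    rewrite D1 /D1R; apply: CUT_ext => a1 a2; apply: CUT_ext => b1 b2.
    rewrite /z /zl CY_cons CY_xw addr0 SH_nil_l SH_comm SH_SH; apply: SH_ext => w1.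
    by rewrite -SH_assoc; apply: SH_ext => v; rewrite SH_comm.
  rewrite D1 /D1R; apply: CUT_ext => a1 a2; apply: CUT_ext => z1 z2.
  exact: key4.
rewrite (@I_ext _ _ (fun a => I (shuffle_list ks) (fun b => SH a b (fun B => CUT B (fun u v => SH (xw k.-1) v (Ps u))))
      + I (shuffle_list ks) (fun b => SH a z (fun a' => QW a' b Ps)))); last first.
  move=> a; rewrite I_shuffle_list_cons -I_add; apply: I_ext => b; by rewrite key.
rewrite I_add; congr (_ + _).
  rewrite (_ : (take _ (k :: ks) ++ drop _ (k :: ks)) = ks) //.
  by rewrite (_ : nat_of_ord (@ord0 (size ks)) = 0%N) // take0 drop1.
have -> : I alpha (fun a => I (shuffle_list ks) (fun b => SH a z (fun a' => QW a' b Ps))) =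
    I (fs_shuffle alpha (fs_word z)) (fun a' => I (shuffle_list ks) (fun b => QW a' b Ps)).
  rewrite I_shuffle; apply: I_ext => a; rewrite I_word SH_I; done.
rewrite IH; apply: eq_bigr => i _.
rewrite I_shuffle; apply: I_ext => a; rewrite I_word.
rewrite I_shuffle_list_cons SH_I; apply: I_ext => b'.
by rewrite SH_assoc.
Qed.

Lemma zw_cons k ks : zw (k :: ks) = zl k ++ zw ks. Proof. by []. Qed.
Lemma zw_cat s1 s2 : zw (s1 ++ s2) = zw s1 ++ zw s2.
Proof. by rewrite /zw map_cat flatten_cat. Qed.
Lemma zl_E k : zl k = yL :: xw k.-1. Proof. by []. Qed.

Lemma CY_xw_cat m w Ps : CY (xw m ++ w) Ps = CY w (fun u v => Ps (xw m ++ u) v).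
Proof. by elim: m Ps => [|m IH] Ps //=; rewrite add0r IH. Qed.

Lemma CY_cat_xw w c Ps : CY (w ++ xw c) Ps = CY w (fun u v => Ps u (v ++ xw c)).
Proof.
elim: w Ps => [|p w IH] Ps /=; first by rewrite CY_xw.
by rewrite IH.
Qed.

Lemma sum_cuts ks Ps :
  \sum_(i < size ks) Ps (zw (take i ks)) (behead (zw (drop i ks))) = CY (zw ks) Ps.
Proof.
elim: ks Ps => [|k ks IH] Ps; first by rewrite big_ord0.
rewrite big_ord_recl zw_cons zl_E cat_cons CY_cons CY_xw_cat -IH; congr (_ + _).
Qed.

Lemma SH_PD m W n G :
  SH (xw m ++ yL :: W) (xw n) G =
  \sum_(j < n.+1) ('C(m + j, j))%:R * SH W (xw (n - j)) (fun w => G (xw (m + j) ++ yL :: w)).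
Proof.
elim: m n G => [|m IHm] n G.
  elim: n G => [|n IHn] G.
    by rewrite big_ord_recl big_ord0 addr0 SH_nil_r /= bin0 mul1r SH_nil_r.
  rewrite -[xw 0 ++ _]/(yL :: W) -[xw n.+1]/(xL :: xw n) SH_cons.
  rewrite -[yL :: W]/(xw 0 ++ yL :: W) IHn [in RHS]big_ord_recl subn0 add0n bin0 mul1r.
  congr (_ + _).
  apply: eq_bigr => j _; rewrite lift0 subSS !add0n !binn.
  by [].
elim: n G => [|n IHn] G.
  by rewrite big_ord_recl big_ord0 addr0 SH_nil_r /= bin0 mul1r SH_nil_r addn0.
rewrite -[xw m.+1 ++ _]/(xL :: (xw m ++ yL :: W)) -[xw n.+1]/(xL :: xw n) SH_cons.
rewrite -[xL :: (xw m ++ yL :: W)]/(xw m.+1 ++ yL :: W) IHn.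
rewrite -[xL :: xw n]/(xw n.+1) IHm.
rewrite big_ord_recl [in RHS]big_ord_recl !addn0 !bin0 !subn0 -addrA; congr (_ + _).
rewrite -big_split /=; apply: eq_bigr => j _.
rewrite /bump /= add1n subSS.
have -> : (m.+1 + j.+1 = (m + j.+1).+1)%N by lia.
rewrite binS natrD mulrDl; congr (_ + _).
have -> : (m.+1 + j = m + j.+1)%N by lia.
by rewrite !addnS.
Qed.

Lemma comps_S m n : comps m.+1 n = flatten [seq [seq j :: l | l <- comps m (n - j)] | j <- iota 0 n.+1].
Proof. by []. Qed.

Lemma sum_comps_S m n (f : seq nat -> rat) :
  \sum_(l <- comps m.+1 n) f l = \sum_(j < n.+1) \sum_(l <- comps m (n - j)) f ((j : nat) :: l).
Proof.
have e : iota 0 n.+1 = index_iota 0 n.+1 by rewrite /index_iota subn0.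
rewrite comps_S big_flatten big_map e big_mkord.
by apply: eq_bigr => j _; rewrite big_map.
Qed.

Lemma sum_comps_1 n (f : seq nat -> rat) : \sum_(l <- comps 1 n) f l = f [:: n].
Proof.
rewrite sum_comps_S big_ord_recr /= subnn big_cons big_nil addr0.
rewrite big1 ?add0r // => j _.
have : (n - j != 0)%N by rewrite subn_eq0 -ltnNge ltn_ord.
by move/negbTE => ->; rewrite big_nil.
Qed.

Lemma bcoef_cons k ks j ls : bcoef (k :: ks) (j :: ls) = ('C(k + j - 1, j) * bcoef ks ls)%N.
Proof. by rewrite /bcoef /= big_cons. Qed.

Lemma SH_rev' v n H : SH (rev v) (xw n) H = SH v (xw n) (fun w => H (rev w)).
Proof.
by rewrite -SH_rev rev_xw revK.
Qed.

Lemma zw_rev_cons x s : zw (rev (x :: s)) = zw (rev s) ++ zl x.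
Proof. by rewrite rev_cons -cats1 zw_cat /zw /= cats0. Qed.

Lemma gaps kr n G : kr != [::] -> all (fun k => 0 < k)%N kr ->
  \sum_(l <- comps (size kr) n) (bcoef kr l)%:R * G (zw (rev [seq p.1 + p.2 | p <- zip kr l])) =
  SH (rev (behead (zw kr))) (xw n) (fun a => G (yL :: a)).
Proof.
elim: kr n G => [|k kr IH] n G // _ /andP[kpos hall].
case: kr IH hall => [|k2 kr] IH hall.
  rewrite /= sum_comps_1 /bcoef /= big_cons big_nil muln1 cats0 -/(xw k.-1) rev_xw SH_xx.
  rewrite /zw /= cats0 /zl.
  have -> : ((k + n).-1 = k.-1 + n)%N by lia.
  congr (_ * _); congr (_%:R).
  have := bin_sub (leq_addl k.-1 n); rewrite addnK => ->.
  by have -> : (k + n - 1 = k.-1 + n)%N by lia.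
rewrite [size _]/= sum_comps_S.
rewrite (eq_bigr (fun j : 'I_n.+1 => ('C(k + j - 1, j))%:R *
     SH (rev (behead (zw (k2 :: kr)))) (xw (n - j)%N) (fun a => G ((yL :: a) ++ zl (k + j))))); last first.
  move=> j _.
  rewrite -(IH (n - j)%N (fun w => G (w ++ zl (k + j)))) // mulr_sumr.
  apply: eq_bigr => l _.
  by rewrite bcoef_cons natrM -mulrA [zip _ _]/= [map _ _]/= zw_rev_cons.
have hv : behead (zw (k :: k2 :: kr)) = xw k.-1 ++ yL :: behead (zw (k2 :: kr)) by [].
rewrite hv SH_rev' SH_PD; apply: eq_bigr => j _.
rewrite SH_rev'.
have -> : (k + j - 1 = k.-1 + j)%N by lia.
congr (_ * _); apply: SH_ext => w.
rewrite rev_cat /= rev_cons rev_xw /zl.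
have -> : ((k + j).-1 = k.-1 + j)%N by lia.
by rewrite -cats1 -catA.
Qed.

Lemma size_zw ks : all (fun k => 0 < k)%N ks -> size (zw ks) = sumn ks.
Proof.
elim: ks => [|k ks IH] //= /andP[kp h].
by rewrite size_cat /= size_nseq IH // -addSn prednK.
Qed.

Lemma I_fs_list (T : Type) (s : seq T) (c : T -> rat) (g : T -> word) G :
  I (flatten [seq fs_scale (c x) (fs_word (g x)) | x <- s]) G = \sum_(x <- s) c x * G (g x).
Proof. rewrite I_flatten; apply: eq_bigr => x _; by rewrite I_scale I_word. Qed.

Lemma phw ks n F : all (fun k => 0 < k)%N ks ->
  I (phihat_word ks n) F = (n == 0%N)%:R * F (zw ks) + CY (zw ks) (PsiF n F).
Proof.
move=> hall.
rewrite /phihat_word I_flatten.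
have e : iota 0 (size ks).+1 = index_iota 0 (size ks).+1 by rewrite /index_iota subn0.
rewrite e big_mkord big_ord_recr [RHS]addrC; congr (_ + _); last first.
  rewrite take_size drop_size I_scale expr0 mul1r I_shuffle I_word.
  case: n => [|n].
    rewrite (_ : comps (size [::]) 0 = [:: [::]]) // I_fs_list big_cons big_nil addr0.
    by rewrite /bcoef big_nil mul1r (_ : zw (rev _) = [::]) // SH_nil_r eqxx mul1r.
  by rewrite (_ : comps (size [::]) n.+1 = [::]) // I_nil mul0r.
rewrite -sum_cuts; apply: eq_bigr => i _.
rewrite (_ : nat_of_ord (widen_ord (leqnSn (size ks)) i) = i) //.
rewrite I_scale I_shuffle I_word I_fs_list.
have hne : drop i ks != [::].
  by rewrite -size_eq0 size_drop subn_eq0 -ltnNge ltn_ord.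
have hpos : all (fun k => 0 < k)%N (drop i ks).
  by apply/allP => k hk; apply: (allP hall); exact: mem_drop hk.
rewrite (gaps n (fun w => SH (zw (take i ks)) w F) hne hpos).
rewrite /PsiF; congr (_ * _).
move: hne hpos; case: (drop i ks) => [|k kr] // _ hp.
rewrite -size_zw // zw_cons zl_E /=.
Qed.

Lemma zw_idx_aux w acc : (0 < acc)%N -> zw (idx_aux acc w) = yL :: xw acc.-1 ++ w.
Proof.
elim: w acc => [|b w IH] acc hacc /=.
  by rewrite /zw /= cats0.
case: b.
  rewrite zw_cons IH // zl_E /=.
rewrite IH //= -cat_rcons; congr (_ :: _).
by rewrite -xw_S prednK.
Qed.

Lemma idx_aux_pos w acc : (0 < acc)%N -> all (fun k => 0 < k)%N (idx_aux acc w).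
Proof.
elim: w acc => [|b w IH] acc hacc /=; first by rewrite hacc.
by case: b; rewrite /= ?hacc IH.
Qed.

Lemma I_phihat p n F : I (phihat p n) F = I p (fun w => I (phihat_word (idx_of w) n) F).
Proof.
rewrite /phihat /I big_flatten /= big_map; apply: eq_bigr => cw _.
rewrite -/(I _ F) -/(I _ F). rewrite -I_scale. done.
Qed.

Lemma SH_yy a b H H' : (forall w, H (yL :: w) = H' (yL :: w)) ->
  SH (yL :: a) (yL :: b) H = SH (yL :: a) (yL :: b) H'.
Proof. by move=> e; rewrite !SH_cons; congr (_ + _); apply: SH_ext => w; rewrite e. Qed.

Lemma sl_y ks Phi Phi' : ks != [::] -> (forall w, Phi (yL :: w) = Phi' (yL :: w)) ->
  I (shuffle_list ks) Phi = I (shuffle_list ks) Phi'.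
Proof.
elim: ks Phi Phi' => [|k ks IH] // Phi Phi' _ e.
rewrite !I_shuffle_list_cons.
case: ks IH => [|k2 ks] IH.
  by rewrite /= !I_word !SH_nil_r zl_E e.
have h : forall w, (fun b => SH (zl k) b Phi) (yL :: w) = (fun b => SH (zl k) b Phi') (yL :: w).
  by move=> w /=; rewrite zl_E; apply: SH_yy.
exact: (IH _ _ isT h).
Qed.

Lemma SL_snoc L c' G :
  I (shuffle_list (L ++ [:: c'])) G = I (shuffle_list L) (fun b => SH b (zl c') G).
Proof.
elim: L G => [|k L IH] G.
  by rewrite /= I_shuffle !I_word SH_nil_r SH_nil_l.
rewrite cat_cons !I_shuffle_list_cons IH; apply: I_ext => b'.
by rewrite SH_assoc.
Qed.

Lemma QW_nil W Ps : QW [::] W Ps = CY W Ps.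
Proof. by rewrite /QW CUT_nil; apply: CY_ext => u v; rewrite !SH_nil_l. Qed.

Lemma sum_iota_ord (f : nat -> rat) m : \sum_(i <- iota 0 m) f i = \sum_(i < m) f i.
Proof. by rewrite -(big_mkord (fun _ => true)) /index_iota subn0. Qed.

Lemma main ks c n F : ks != [::] -> all (fun k => 0 < k)%N ks -> (0 < c)%N ->
  I (phihat (fs_rcat (shuffle_list ks) (nseq c xL)) n) F =
  I ((if n == 0%N then fs_rcat (shuffle_list ks) (nseq c xL) else [::])
          ++ flatten [seq
               fs_scale ((-1) ^+ (nth 0%N ks i + c))
                 (flatten [seq
                    fs_scale ('C(nth 0%N ks i + l - 1, l)
                              * 'C(c + (n - l) - 1, n - l))%:R
                      (fs_rcat (shuffle_list (take i ks ++ drop i.+1 ks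
                                               ++ [:: (c + (n - l))%N]))
                               (nseq (nth 0%N ks i + l) xL))
                  | l <- iota 0 n.+1])
             | i <- iota 0 (size ks)]) F.
Proof.
move=> hne hpos hc.
rewrite I_phihat I_rcat.
rewrite (@sl_y _ _ (fun W => (n == 0%N)%:R * F (W ++ xw c) + CY W (fun u v => PsiF n F u (v ++ xw c)))) //; last first.
  move=> w'.
  rewrite cat_cons /idx_of phw ?idx_aux_pos // zw_idx_aux //= CY_cat_xw.
  by [].
rewrite I_add I_mull I_cat; congr (_ + _).
  by case: (n == 0%N); rewrite ?I_rcat ?mul1r ?I_nil ?mul0r.
rewrite (@I_ext _ _ (fun W => QW [::] W (fun u v => PsiF n F u (v ++ xw c)))); last first.
  by move=> W; rewrite QW_nil.
rewrite -(I_word [::] (fun a => I (shuffle_list ks) (fun W => QW a W _))) claim.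
rewrite I_flatten sum_iota_ord; apply: eq_bigr => i _.
rewrite I_word.
rewrite (@I_ext _ _ (fun B => CUT B (fun u v => SH (xw (nth 0%N ks i).-1) v
          (fun W => PsiF n F u (W ++ xw (c.-1).+1))))); last first.
  by move=> B; rewrite SH_nil_l prednK.
have hki : (0 < nth 0%N ks i)%N.
  by apply: (allP hpos); rewrite mem_nth.
under I_ext => B do rewrite lemma3.
rewrite I_mull I_scale !prednK //; congr (_ * _).
rewrite I_sum I_flatten sum_iota_ord; apply: eq_bigr => l _.
rewrite I_mull I_scale; congr (_ * _).
rewrite I_rcat catA SL_snoc; apply: I_ext => B.
by rewrite zl_E subn1.
Qed.

End Aux.
Import Aux.

(* ks = (k_1,...,k_r), kr1 = k_{r+1}; the identity is compared coefficient
   of t^n by coefficient of t^n, word by word. *)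
Theorem corollary3p7 (r : nat) (ks : seq nat) (kr1 : nat) :
  (1 <= r)%N -> size ks = r -> all (fun k => 0 < k)%N ks -> (0 < kr1)%N ->
  forall (n : nat) (w : word),
    coef (phihat (fs_rcat (shuffle_list ks) (nseq kr1 xL)) n) w =
    coef ((if n == 0%N then fs_rcat (shuffle_list ks) (nseq kr1 xL) else [::])
          ++ flatten [seq
               fs_scale ((-1) ^+ (nth 0%N ks i + kr1))
                 (flatten [seq
                    fs_scale ('C(nth 0%N ks i + l - 1, l)
                              * 'C(kr1 + (n - l) - 1, n - l))%:R
                      (fs_rcat (shuffle_list (take i ks ++ drop i.+1 ks
                                               ++ [:: (kr1 + (n - l))%N]))
                               (nseq (nth 0%N ks i + l) xL))
                  | l <- iota 0 n.+1])
             | i <- iota 0 r]) w.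
Proof.
move=> hr hs hpos hc n w.
rewrite !coefE -hs; apply: main => //.
by rewrite -size_eq0 hs -lt0n.
Qed.
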